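(* The following identities hold: \begin{align*} \sum_{k=0}^\infty\frac{(22k^2+17k-2)\binom{4k}k}{(k+1)16^k}&=17, \\\sum_{k=0}^\infty\frac{(11k^2+8k+1)\binom{4k}k}{(3k+1)(3k+2)16^k}&=1, \\\sum_{k=0}^\infty\frac{(22k^2-18k+3)\binom{4k}k}{(2k-1)(4k-1)(4k-3)16^k}&=-\frac13. \end{align*} *)

(* Defs.v *)
From Stdlib Require Import Reals.
From Coquelicot Require Import Coquelicot.
Open Scope R_scope.

Definition binom (n k : nat) : R := Binomial.C n k.

(* Main.v *)
Require Import Defs.
From Stdlib Require Import Reals Lra Lia.
From Coquelicot Require Import Coquelicot.
Open Scope R_scope.

Fixpoint sm (n : nat) (f : nat -> R) : R :=
  match n with O => 0 | S n => sm n f + f n end.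

Lemma sm_ext n f g : (forall k, (k < n)%nat -> f k = g k) -> sm n f = sm n g.
Proof.
  induction n; intros H; simpl; auto.
  rewrite IHn by (intros; apply H; lia). rewrite H by lia. reflexivity.
Qed.

Lemma sm_plus n f g : sm n (fun k => f k + g k) = sm n f + sm n g.
Proof. induction n; simpl; [lra|]. rewrite IHn; lra. Qed.

Lemma sm_scal n c f : sm n (fun k => c * f k) = c * sm n f.
Proof. induction n; simpl; [lra|]. rewrite IHn; lra. Qed.

Lemma sm_shift n f : sm (S n) f = f 0%nat + sm n (fun k => f (S k)).
Proof. induction n; simpl in *; [lra|]. rewrite IHn; lra. Qed.

Lemma sm_zero n f : (forall k, (k < n)%nat -> f k = 0) -> sm n f = 0.
Proof.
  intros H. rewrite (sm_ext n f (fun _ => 0)) by auto.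
  induction n; simpl; [lra|]. rewrite IHn by (intros; apply H; lia). lra.
Qed.

Lemma sm_le n f g : (forall k, (k < n)%nat -> f k <= g k) -> sm n f <= sm n g.
Proof.
  induction n; intros H; simpl; [lra|].
  assert (sm n f <= sm n g) by (apply IHn; intros; apply H; lia).
  assert (f n <= g n) by (apply H; lia). lra.
Qed.

Lemma sm_abs n f : Rabs (sm n f) <= sm n (fun k => Rabs (f k)).
Proof.
  induction n; simpl. rewrite Rabs_R0; lra.
  eapply Rle_trans; [apply Rabs_triang|]. lra.
Qed.

Lemma sm_extend n m f : (n <= m)%nat -> (forall k, (n <= k < m)%nat -> f k = 0) ->
  sm m f = sm n f.
Proof.
  intros Hnm H. induction m.
  - replace n with 0%nat by lia. reflexivity.
  - destruct (Nat.eq_dec n (S m)) as [->|Hn]; [reflexivity|].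
    simpl. rewrite IHm by (lia || (intros; apply H; lia)). rewrite H by lia. lra.
Qed.

Lemma sm_sfr f N : sum_f_R0 f N = sm (S N) f.
Proof. induction N; simpl in *; [lra|]. rewrite IHN. reflexivity. Qed.

Lemma sm_sum_n f N : sum_n f N = sm (S N) f.
Proof. rewrite sum_n_Reals. apply sm_sfr. Qed.

Lemma sm_geom n q : 0 <= q < 1 -> sm n (fun k => q ^ k) <= 1 / (1 - q).
Proof.
  intros Hq. assert (E : sm n (fun k => q ^ k) * (1 - q) = 1 - q ^ n).
  { induction n; simpl; [lra|]. rewrite Rmult_plus_distr_r, IHn. ring. }
  assert (0 <= q ^ n) by (apply pow_le; lra).
  apply (Rmult_le_reg_r (1 - q)); [lra|]. rewrite E. field_simplify; lra.
Qed.

Lemma sm_triangle N (f : nat -> nat -> R) :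
  sm N (fun k => sm (N - k) (fun j => f k j)) =
  sm N (fun n => sm (S n) (fun k => f k (n - k)%nat)).
Proof.
  induction N.
  - reflexivity.
  - rewrite (sm_ext (S N) _ (fun k => (if Nat.eq_dec k N then f N 0%nat else
        sm (N - k) (fun j => f k j) + f k (N - k)%nat))).
    2:{ intros k Hk. destruct (Nat.eq_dec k N) as [->|Hne].
        - rewrite Nat.sub_succ_l by lia. rewrite Nat.sub_diag. simpl. lra.
        - rewrite Nat.sub_succ_l by lia. simpl. reflexivity. }
    simpl sm at 1. destruct (Nat.eq_dec N N) as [_|]; [|congruence].
    rewrite (sm_ext N _ (fun k => sm (N - k) (fun j => f k j) + f k (N - k)%nat)).
    2:{ intros k Hk. destruct (Nat.eq_dec k N); [lia|reflexivity]. }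
    rewrite sm_plus, IHN. simpl. rewrite Nat.sub_diag. lra.
Qed.

Fixpoint fall (x : R) (n : nat) : R :=
  match n with O => 1 | S n => fall x n * (x - INR n) end.

Lemma fall_add x a b : fall x (a + b) = fall x a * fall (x - INR a) b.
Proof.
  induction b; simpl.
  - rewrite Nat.add_0_r; ring.
  - rewrite Nat.add_succ_r. simpl. rewrite IHb, plus_INR. ring.
Qed.

Lemma fall_shift x n : fall (x + 1) (S n) = (x + 1) * fall x n.
Proof.
  induction n.
  - simpl. ring.
  - change (fall (x + 1) (S (S n))) with (fall (x+1) (S n) * (x + 1 - INR (S n))).
    rewrite IHn. simpl fall. rewrite S_INR. ring.
Qed.

Lemma fall_fact m : fall (INR m) m = INR (Factorial.fact m).
Proof.
  induction m.
  - reflexivity.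
  - rewrite S_INR, fall_shift, IHm. change (Factorial.fact (S m)) with (S m * Factorial.fact m)%nat.
    rewrite mult_INR, S_INR. ring.
Qed.

Lemma fall_zero m n : (m < n)%nat -> fall (INR m) n = 0.
Proof.
  intros H. replace n with (S m + (n - S m))%nat by lia.
  rewrite fall_add. simpl. rewrite Rminus_diag. ring.
Qed.

Lemma fall_nonneg m n : 0 <= fall (INR m) n.
Proof.
  induction n; simpl; [lra|].
  destruct (Compare_dec.le_lt_dec n m).
  - apply Rmult_le_pos; auto. apply le_INR in l. lra.
  - rewrite fall_zero by lia. lra.
Qed.

Definition bnf (m j : nat) : R := fall (INR m) j / INR (Factorial.fact j).

Lemma bnf_nonneg m j : 0 <= bnf m j.
Proof.
  unfold bnf. apply Rmult_le_pos; [apply fall_nonneg|].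
  left. apply Rinv_0_lt_compat. apply lt_0_INR. apply Factorial.lt_O_fact.
Qed.

Lemma bnf_zero m j : (m < j)%nat -> bnf m j = 0.
Proof. intros; unfold bnf; rewrite fall_zero by auto; lra. Qed.

Lemma bnf_0 m : bnf m 0 = 1.
Proof. unfold bnf; simpl; lra. Qed.

Lemma C_bnf m j : (j <= m)%nat -> Binomial.C m j = bnf m j.
Proof.
  intros H. unfold Binomial.C, bnf.
  rewrite <- (fall_fact m).
  assert (E: fall (INR m) m = fall (INR m) j * INR (Factorial.fact (m-j))).
  { rewrite <- fall_fact. rewrite minus_INR by auto. rewrite <- fall_add. f_equal; lia. }
  rewrite E.
  assert (INR (Factorial.fact (m - j)) <> 0) by apply INR_fact_neq_0.
  assert (INR (Factorial.fact j) <> 0) by apply INR_fact_neq_0.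
  field. auto.
Qed.

Lemma bnf_pascal m j : bnf (S m) (S j) = bnf m j + bnf m (S j).
Proof.
  unfold bnf. rewrite S_INR, fall_shift.
  change (fall (INR m) (S j)) with (fall (INR m) j * (INR m - INR j)).
  change (Factorial.fact (S j)) with (S j * Factorial.fact j)%nat. rewrite mult_INR, S_INR.
  assert (INR (Factorial.fact j) <> 0) by apply INR_fact_neq_0.
  assert (0 <= INR j) by apply pos_INR.
  field. split; lra.
Qed.

Lemma bnf_binom m z M : (m < M)%nat ->
  sm M (fun j => bnf m j * z ^ j) = (1 + z) ^ m.
Proof.
  intros H. rewrite (sm_extend (S m) M) by (lia || (intros; rewrite bnf_zero by lia; lra)).
  rewrite Rplus_comm, binomial, sm_sfr. apply sm_ext. intros k Hk.
  rewrite C_bnf by lia. rewrite pow1. ring.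
Qed.

Definition dif (f : nat -> R) : nat -> R := fun k => f (S k) - f k.

Fixpoint dlt (n : nat) (f : nat -> R) : Prop :=
  match n with O => forall k, f k = 0 | S n => dlt n (dif f) end.

Lemma dlt_ext n f g : (forall k, f k = g k) -> dlt n f -> dlt n g.
Proof.
  revert f g; induction n; simpl; intros f g E H.
  - intros k; rewrite <- E; auto.
  - apply (IHn (dif f)); auto. intros k; unfold dif; rewrite !E; auto.
Qed.

Lemma dlt_S n f : dlt n f -> dlt (S n) f.
Proof.
  revert f; induction n; simpl; intros f H.
  - intros k; unfold dif; rewrite !H; lra.
  - apply IHn; auto.
Qed.

Lemma dlt_le n m f : (n <= m)%nat -> dlt n f -> dlt m f.
Proof. induction 1; auto. intros; apply dlt_S; auto. Qed.

Lemma dlt_plus n f g : dlt n f -> dlt n g -> dlt n (fun k => f k + g k).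
Proof.
  revert f g; induction n; simpl; intros f g Hf Hg.
  - intros k; rewrite Hf, Hg; lra.
  - apply (dlt_ext n (fun k => dif f k + dif g k)).
    + intros k; unfold dif; ring.
    + apply IHn; auto.
Qed.

Lemma dlt_scal n c f : dlt n f -> dlt n (fun k => c * f k).
Proof.
  revert f; induction n; simpl; intros f Hf.
  - intros k; rewrite Hf; lra.
  - apply (dlt_ext n (fun k => c * dif f k)).
    + intros k; unfold dif; ring.
    + apply IHn; auto.
Qed.

Lemma dlt_shift n f : dlt n f -> dlt n (fun k => f (S k)).
Proof.
  revert f; induction n; simpl; intros f Hf.
  - intros k; apply Hf.
  - apply (dlt_ext n (fun k => dif f (S k))).
    + intros k; unfold dif; ring.
    + apply IHn; auto.
Qed.

Lemma dlt_const c : dlt 1 (fun _ => c).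
Proof. simpl. intros k. unfold dif. lra. Qed.

Lemma dlt_mul_lin n a b f : dlt n f -> dlt (S n) (fun k => (a * INR k + b) * f k).
Proof.
  revert f; induction n; intros f Hf.
  - simpl in *. intros k; unfold dif; rewrite !Hf; lra.
  - change (dlt (S n) (dif (fun k => (a * INR k + b) * f k))).
    apply (dlt_ext (S n) (fun k => a * f (S k) + (a * INR k + b) * dif f k)).
    + intros k; unfold dif; rewrite S_INR; ring.
    + apply dlt_plus.
      * apply dlt_scal, dlt_shift; auto.
      * apply IHn. exact Hf.
Qed.

Definition alt (n : nat) (f : nat -> R) : R :=
  sm (S n) (fun k => (-1) ^ k * bnf n k * f k).

Lemma alt_rec n f : alt (S n) f = - alt n (dif f).
Proof.
  unfold alt, dif.
  rewrite sm_shift. rewrite bnf_0.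
  rewrite (sm_ext (S n) _ (fun k => - ((-1) ^ k * bnf n k * f (S k)) +
      (-1) ^ (S k) * bnf n (S k) * f (S k))).
  2:{ intros k Hk. rewrite bnf_pascal. simpl. ring. }
  rewrite sm_plus.
  assert (E: sm (S n) (fun k => (-1) ^ S k * bnf n (S k) * f (S k)) =
             sm (S n) (fun k => (-1) ^ k * bnf n k * f k) - f 0%nat).
  { rewrite (sm_shift n (fun k => (-1) ^ k * bnf n k * f k)).
    simpl sm at 1. rewrite bnf_zero by lia. rewrite bnf_0. simpl. ring. }
  rewrite E.
  rewrite (sm_ext (S n) (fun k => - ((-1) ^ k * bnf n k * f (S k)))
     (fun k => (-1) * ((-1) ^ k * bnf n k * f (S k)))) by (intros; ring).
  rewrite sm_scal.
  rewrite (sm_ext (S n) (fun k => (-1) ^ k * bnf n k * (f (S k) - f k))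
     (fun k => (-1) ^ k * bnf n k * f (S k) + (-1) * ((-1) ^ k * bnf n k * f k)))
     by (intros; ring).
  rewrite sm_plus, sm_scal. simpl. ring.
Qed.

Lemma alt_dlt n f : dlt n f -> alt n f = 0.
Proof.
  revert f; induction n; intros f Hf.
  - unfold alt. simpl in *. rewrite Hf. ring.
  - rewrite alt_rec. rewrite IHn; [lra|]. exact Hf.
Qed.

Definition rho3 (k : nat) : R :=
  (22 * INR k ^ 2 - 18 * INR k + 3) / ((2 * INR k - 1) * (4 * INR k - 1) * (4 * INR k - 3)).
Definition beta (k : nat) : R := rho3 k * bnf (4 * k) k.
Definition W (k j : nat) : R := beta k * bnf (3 * k) j * (-1) ^ j.
Definition cc (n : nat) : R := sm (S n) (fun k => W k (n - k)).

Lemma nat_cases (k : nat) : INR k = 0 \/ 1 <= INR k.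
Proof. destruct k; [left; reflexivity|right]. rewrite S_INR. pose proof (pos_INR k). lra. Qed.

Lemma dens_nz k : (2 * INR k - 1) <> 0 /\ (4 * INR k - 1) <> 0 /\ (4 * INR k - 3) <> 0
   /\ (4 * INR k - 2) <> 0.
Proof. destruct (nat_cases k) as [H|H]; rewrite ?H; repeat split; lra. Qed.

Lemma pow_m1_sub n k : (k <= n)%nat -> (-1) ^ (n - k) = (-1) ^ n * (-1) ^ k.
Proof.
  intros H. replace n with ((n - k) + k)%nat at 2 by lia.
  rewrite pow_add. rewrite Rmult_assoc, <- pow_add.
  replace (k + k)%nat with (2 * k)%nat by lia. rewrite pow_mult. simpl. 
  replace ((-1) * ((-1) * 1)) with 1 by ring. rewrite pow1. ring.
Qed.

Lemma bnf_fact n k : (k <= n)%nat ->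
  bnf n k = INR (Factorial.fact n) / (INR (Factorial.fact k) * INR (Factorial.fact (n - k))).
Proof. intros; rewrite <- C_bnf by auto. reflexivity. Qed.

Definition hh (n k : nat) : R := rho3 k * fall (INR (4 * k)) n.

Lemma W_alt n k : (k <= n)%nat ->
  W k (n - k) = (-1) ^ n / INR (Factorial.fact n) * ((-1) ^ k * bnf n k * hh n k).
Proof.
  intros H. unfold W, beta, hh.
  rewrite (pow_m1_sub n k H). rewrite (bnf_fact n k H).
  unfold bnf.
  assert (E: fall (INR (4 * k)) k * fall (INR (3 * k)) (n - k) = fall (INR (4 * k)) n).
  { replace (INR (3 * k)) with (INR (4 * k) - INR k) by (rewrite !mult_INR; simpl INR; ring).
    rewrite <- fall_add. f_equal. lia. }
  assert (INR (Factorial.fact (n - k)) <> 0) by apply INR_fact_neq_0.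
  assert (INR (Factorial.fact k) <> 0) by apply INR_fact_neq_0.
  assert (INR (Factorial.fact n) <> 0) by apply INR_fact_neq_0.
  rewrite <- E. field. auto.
Qed.

Lemma dlt_fall_lin m : dlt (S m) (fun k => fall (4 * INR k - 4) m).
Proof.
  induction m.
  - simpl. intros k. unfold dif. simpl. lra.
  - apply (dlt_ext (S (S m)) (fun k => (4 * INR k + (-4 - INR m)) * fall (4 * INR k - 4) m)).
    + intros k. simpl. ring.
    + apply dlt_mul_lin. auto.
Qed.

Lemma hh_poly m k : hh (4 + m) k =
  8 * (22 * INR k ^ 2 - 18 * INR k + 3) * INR k * fall (4 * INR k - 4) m.
Proof.
  unfold hh, rho3. rewrite fall_add. rewrite mult_INR.
  replace (INR 4) with 4 by (simpl; ring).
  destruct (dens_nz k) as (H1 & H2 & H3 & H4).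
  simpl fall. replace (INR 0) with 0 by reflexivity. replace (INR 1) with 1 by reflexivity.
  replace (INR 2) with 2 by (simpl; ring). replace (INR 3) with 3 by (simpl; ring).
  field. auto.
Qed.

Lemma dlt_hh n : (4 <= n)%nat -> dlt n (hh n).
Proof.
  intros H. replace n with (4 + (n - 4))%nat by lia. set (m := (n - 4)%nat).
  apply (dlt_ext _ (fun k => 8 * ((22 * INR k ^ 2 - 18 * INR k + 3) * (INR k * fall (4 * INR k - 4) m)))).
  { intros k. rewrite hh_poly. ring. }
  apply dlt_scal.
  assert (H1 : dlt (S (S m)) (fun k => (1 * INR k + 0) * fall (4 * INR k - 4) m)).
  { apply dlt_mul_lin, dlt_fall_lin. }
  assert (H1' : dlt (S (S m)) (fun k => INR k * fall (4 * INR k - 4) m)).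
  { eapply dlt_ext; [|exact H1]. intros; simpl; ring. }
  assert (H2 : dlt (S (S (S m))) (fun k => (1 * INR k + 0) * (INR k * fall (4 * INR k - 4) m))).
  { apply dlt_mul_lin; auto. }
  assert (H3 : dlt (S (S (S (S m)))) (fun k => (1 * INR k + 0) * ((1 * INR k + 0) * (INR k * fall (4 * INR k - 4) m)))).
  { apply dlt_mul_lin; auto. }
  eapply dlt_ext.
  2:{ apply dlt_plus; [apply dlt_plus|].
      - apply (dlt_scal _ 22). exact H3.
      - apply (dlt_scal _ (-18)). apply (dlt_le (S (S (S m)))); [lia|exact H2].
      - apply (dlt_scal _ 3). apply (dlt_le (S (S m))); [lia|exact H1']. }
  intros k; simpl; ring.
Qed.

Lemma cc_big n : (4 <= n)%nat -> cc n = 0.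
Proof.
  intros H. unfold cc.
  rewrite (sm_ext (S n) _ (fun k => (-1) ^ n / INR (Factorial.fact n) * ((-1) ^ k * bnf n k * hh n k))).
  2:{ intros k Hk. apply W_alt. lia. }
  rewrite sm_scal. fold (alt n (hh n)). rewrite alt_dlt by (apply dlt_hh; auto). ring.
Qed.

Lemma cc_small : cc 0 = -1 /\ cc 1 = 28/3 /\ cc 2 = -40/3 /\ cc 3 = 16/3.
Proof.
  unfold cc, W, beta, rho3, bnf. simpl. repeat split; field.
Qed.

Definition rat (k : nat) : R :=
  ((4 * INR k + 1) * (4 * INR k + 2) * (4 * INR k + 3) * (4 * INR k + 4)) /
  ((INR k + 1) * (3 * INR k + 1) * (3 * INR k + 2) * (3 * INR k + 3)).

Lemma C_ratio k : Binomial.C (4 * S k) (S k) = Binomial.C (4 * k) k * rat k.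
Proof.
  unfold Binomial.C, rat.
  replace (4 * S k)%nat with (S (S (S (S (4 * k))))) by lia.
  replace (S (S (S (S (4 * k)))) - S k)%nat with (S (S (S (3 * k)))) by lia.
  replace (4 * k - k)%nat with (3 * k)%nat by lia.
  rewrite !fact_simpl. rewrite !mult_INR, !S_INR, !mult_INR.
  pose proof (INR_fact_neq_0 (4 * k)). pose proof (INR_fact_neq_0 (3 * k)).
  pose proof (INR_fact_neq_0 k). pose proof (pos_INR k).
  simpl INR.
  field. repeat split; try lra; apply INR_fact_neq_0.
Qed.

Lemma rat_le k : 0 <= rat k <= 256 / 27.
Proof.
  unfold rat. pose proof (pos_INR k) as H. set (K := INR k) in *.
  split.
  - apply Rmult_le_pos; [|left; apply Rinv_0_lt_compat]; [|].
    + repeat apply Rmult_le_pos; lra.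
    + repeat apply Rmult_lt_0_compat; lra.
  - assert (0 < (K + 1) * (3 * K + 1) * (3 * K + 2) * (3 * K + 3)) by
      (repeat apply Rmult_lt_0_compat; lra).
    apply (Rmult_le_reg_r ((K + 1) * (3 * K + 1) * (3 * K + 2) * (3 * K + 3))); auto.
    unfold Rdiv. rewrite Rmult_assoc, Rinv_l by lra. rewrite Rmult_1_r.
    assert (A1: 0 <= 4 * K + 1 <= 4/3 * (3 * K + 1)) by lra.
    assert (A2: 0 <= 4 * K + 2 <= 4/3 * (3 * K + 2)) by lra.
    assert (A3: 0 <= 4 * K + 3 <= 4/3 * (3 * K + 3)) by lra.
    assert (A4: 0 <= 4 * K + 4 <= 4 * (K + 1)) by lra.
    assert (P: (4 * K + 1) * (4 * K + 2) * (4 * K + 3) * (4 * K + 4) <=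
       (4/3 * (3 * K + 1)) * (4/3 * (3 * K + 2)) * (4/3 * (3 * K + 3)) * (4 * (K + 1))).
    { repeat apply Rmult_le_compat; try lra;
      repeat apply Rmult_le_pos; lra. }
    lra.
Qed.

Lemma bnf4_eq k : bnf (4 * k) k = Binomial.C (4 * k) k.
Proof. rewrite C_bnf by lia. reflexivity. Qed.

Lemma bnf4_bound k : 0 <= bnf (4 * k) k <= (256 / 27) ^ k.
Proof.
  split; [apply bnf_nonneg|].
  induction k.
  - rewrite bnf_0. simpl; lra.
  - rewrite bnf4_eq, C_ratio, <- bnf4_eq. rewrite <- tech_pow_Rmult.
    pose proof (rat_le k). pose proof (bnf_nonneg (4 * k) k).
    rewrite (Rmult_comm (256/27)). apply Rmult_le_compat; lra.
Qed.

Lemma rho3_bound k : Rabs (rho3 k) <= 3.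
Proof.
  unfold rho3. destruct (nat_cases k) as [H|H].
  - rewrite H. replace ((22 * 0 ^ 2 - 18 * 0 + 3) / ((2 * 0 - 1) * (4 * 0 - 1) * (4 * 0 - 3))) with (-1) by field.
    rewrite Rabs_left by lra. lra.
  - set (K := INR k) in *.
    assert (D: 0 < (2 * K - 1) * (4 * K - 1) * (4 * K - 3)) by
      (repeat apply Rmult_lt_0_compat; lra).
    assert (N: 0 < 22 * K ^ 2 - 18 * K + 3) by nra.
    rewrite Rabs_right.
    2:{ left. apply Rdiv_lt_0_compat; auto. }
    apply (Rmult_le_reg_r ((2 * K - 1) * (4 * K - 1) * (4 * K - 3))); auto.
    unfold Rdiv. rewrite Rmult_assoc, Rinv_l by lra. rewrite Rmult_1_r.
    nra.
Qed.

Lemma beta_bound k : Rabs (beta k) <= 3 * (256 / 27) ^ k.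
Proof.
  unfold beta. rewrite Rabs_mult. pose proof (bnf4_bound k).
  rewrite (Rabs_right (bnf (4 * k) k)) by lra.
  apply Rmult_le_compat; try lra. apply Rabs_pos. apply rho3_bound.
Qed.

Definition EE (y : R) (N : nat) : R :=
  sm N (fun k => sm (4 * N) (fun j => if (k + j <? N)%nat then 0 else W k j * y ^ (k + j))).

Lemma term_expand y k M : (3 * k < M)%nat ->
  beta k * (y * (1 - y) ^ 3) ^ k = sm M (fun j => W k j * y ^ (k + j)).
Proof.
  intros H. rewrite Rpow_mult_distr, <- pow_mult.
  replace (1 - y) with (1 + (-1 * y)) by ring.
  rewrite <- (bnf_binom (3 * k) (-1 * y) M H).
  rewrite <- Rmult_assoc, <- sm_scal.
  apply sm_ext. intros j _. unfold W. rewrite Rpow_mult_distr, pow_add. ring.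
Qed.

Lemma P_expand y N :
  sm N (fun k => beta k * (y * (1 - y) ^ 3) ^ k) = sm N (fun n => cc n * y ^ n) + EE y N.
Proof.
  rewrite (sm_ext N _ (fun k => sm (4 * N) (fun j => W k j * y ^ (k + j)))).
  2:{ intros k Hk. apply term_expand. lia. }
  rewrite (sm_ext N _ (fun k => sm (4 * N) (fun j => if (k + j <? N)%nat then W k j * y ^ (k + j) else 0)
       + sm (4 * N) (fun j => if (k + j <? N)%nat then 0 else W k j * y ^ (k + j)))).
  2:{ intros k Hk. rewrite <- sm_plus. apply sm_ext. intros j _.
      destruct (k + j <? N)%nat; ring. }
  rewrite sm_plus. unfold EE. f_equal.
  rewrite (sm_ext N _ (fun k => sm (N - k) (fun j => W k j * y ^ (k + j)))).
  2:{ intros k Hk. rewrite (sm_extend (N - k) (4 * N)).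
      - apply sm_ext. intros j Hj. replace (k + j <? N)%nat with true; auto.
        symmetry. apply Nat.ltb_lt. lia.
      - lia.
      - intros j Hj. replace (k + j <? N)%nat with false; auto.
        symmetry. apply Nat.ltb_ge. lia. }
  rewrite (sm_triangle N (fun k j => W k j * y ^ (k + j))).
  apply sm_ext. intros n _. unfold cc. rewrite Rmult_comm, <- sm_scal.
  apply sm_ext. intros k Hk. replace (k + (n - k))%nat with n by lia. ring.
Qed.

Definition Phi3 (y : R) : R := -1 + 28/3 * y - 40/3 * y ^ 2 + 16/3 * y ^ 3.

Lemma A_val y N : (4 <= N)%nat -> sm N (fun n => cc n * y ^ n) = Phi3 y.
Proof.
  intros H. rewrite (sm_extend 4 N); auto.
  - destruct cc_small as (H0 & H1 & H2 & H3). simpl. rewrite H0, H1, H2, H3.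
    unfold Phi3. simpl pow. field.
  - intros k Hk. rewrite cc_big by lia. ring.
Qed.

Definition lam : R := 101 / 100.

Lemma EE_bound y N : 0 <= y -> 0 <= 256 / 27 * (lam * y) * (1 + lam * y) ^ 3 < 1 ->
  Rabs (EE y N) <= (/ lam) ^ N * (3 / (1 - 256 / 27 * (lam * y) * (1 + lam * y) ^ 3)).
Proof.
  intros Hy Hq. set (u := lam * y) in *. set (q := 256 / 27 * u * (1 + u) ^ 3) in *.
  assert (Hu: 0 <= u) by (unfold u, lam; nra).
  unfold EE. eapply Rle_trans; [apply sm_abs|].
  eapply Rle_trans.
  { apply sm_le. intros k Hk. eapply Rle_trans; [apply sm_abs|].
    apply (sm_le _ _ (fun j => (/ lam) ^ N * (Rabs (beta k) * u ^ k * (bnf (3 * k) j * u ^ j)))).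
    intros j Hj. destruct (k + j <? N)%nat eqn:E.
    - rewrite Rabs_R0. apply Rmult_le_pos. apply pow_le. unfold lam; lra.
      apply Rmult_le_pos. apply Rmult_le_pos. apply Rabs_pos. apply pow_le; auto.
      apply Rmult_le_pos. apply bnf_nonneg. apply pow_le; auto.
    - apply Nat.ltb_ge in E. unfold W. rewrite !Rabs_mult.
      rewrite <- !RPow_abs. rewrite (Rabs_right (bnf _ _)) by (apply Rle_ge, bnf_nonneg).
      replace (Rabs (-1)) with 1 by (rewrite Rabs_left; lra). rewrite pow1. rewrite (Rabs_right y) by lra.
      assert (Hl: y ^ (k + j) <= (/ lam) ^ N * u ^ (k + j)).
      { unfold u. rewrite Rpow_mult_distr.
        assert (lam ^ N <= lam ^ (k + j)) by (apply Rle_pow; [unfold lam; lra| lia]).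
        assert (0 < lam ^ N) by (apply pow_lt; unfold lam; lra).
        assert (0 <= y ^ (k + j)) by (apply pow_le; lra).
        rewrite <- Rinv_pow by (unfold lam; lra).
        replace (/ lam ^ N * (lam ^ (k + j) * y ^ (k + j))) with
          ((lam ^ (k + j) / lam ^ N) * y ^ (k + j)) by (field; lra).
        rewrite <- (Rmult_1_l (y ^ (k + j))) at 1.
        apply Rmult_le_compat_r; auto.
        apply (Rmult_le_reg_r (lam ^ N)); auto. unfold Rdiv.
        rewrite Rmult_assoc, Rinv_l by lra. lra. }
      rewrite !pow_add in *.
      pose proof (Rabs_pos (beta k)). pose proof (bnf_nonneg (3 * k) j).
      replace ((/ lam) ^ N * (Rabs (beta k) * u ^ k * (bnf (3 * k) j * u ^ j))) with
         (Rabs (beta k) * bnf (3 * k) j * 1 * ((/ lam) ^ N * (u ^ k * u ^ j))) by ring.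
      apply Rmult_le_compat_l; [|exact Hl].
      apply Rmult_le_pos; [apply Rmult_le_pos|]; lra. }
  rewrite (sm_ext N _ (fun k => (/ lam) ^ N * (Rabs (beta k) * u ^ k * (1 + u) ^ (3 * k)))).
  2:{ intros k Hk. rewrite sm_scal, sm_scal. rewrite bnf_binom by lia. reflexivity. }
  rewrite sm_scal. apply Rmult_le_compat_l; [apply pow_le; unfold lam; lra|].
  eapply Rle_trans.
  { apply (sm_le _ _ (fun k => 3 * q ^ k)). intros k Hk.
    unfold q. rewrite pow_mult.
    replace ((256 / 27 * u * (1 + u) ^ 3) ^ k) with ((256/27) ^ k * (u ^ k * ((1 + u) ^ 3) ^ k))
      by (rewrite !Rpow_mult_distr; ring).
    rewrite <- Rmult_assoc. rewrite Rmult_assoc.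
    apply Rmult_le_compat_r; [|apply beta_bound].
    apply Rmult_le_pos; apply pow_le; [lra|]. apply pow_le; lra. }
  rewrite sm_scal. pose proof (sm_geom N q Hq). unfold Rdiv in *. apply Rmult_le_compat_l; [lra|]. eapply Rle_trans; [exact H|lra].
Qed.

Lemma y_exists : { y : R | 8 / 100 <= y <= 81 / 1000 /\ 8 * y ^ 3 - 20 * y ^ 2 + 14 * y - 1 = 0 }.
Proof.
  destruct (IVT (fun z => 8 * z ^ 3 - 20 * z ^ 2 + 14 * z - 1) (8/100) (81/1000)) as [y [H1 H2]].
  - reg.
  - lra.
  - simpl. lra.
  - simpl. lra.
  - exists y. split; auto.
Qed.

Lemma lim_by_bound (u : nat -> R) (l : R) (g : nat -> R) :
  (forall n, Rabs (u n - l) <= g n) -> is_lim_seq g 0 -> is_lim_seq u l.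
Proof.
  intros H Hg.
  apply is_lim_seq_le_le with (fun n => l - g n) (fun n => l + g n).
  - intros n; specialize (H n). pose proof (Rabs_maj2 (u n - l)). pose proof (Rle_abs (u n - l)). lra.
  - replace (Finite l) with (Finite (l - 0)) by (f_equal; ring).
    apply is_lim_seq_minus'; auto. apply is_lim_seq_const.
  - replace (Finite l) with (Finite (l + 0)) by (f_equal; ring).
    apply is_lim_seq_plus'; auto. apply is_lim_seq_const.
Qed.

Definition t3 (k : nat) : R :=
  (22 * INR k ^ 2 - 18 * INR k + 3) * binom (4 * k) k
      / ((2 * INR k - 1) * (4 * INR k - 1) * (4 * INR k - 3) * 16 ^ k).

Lemma sum3 : is_series t3 (- (1 / 3)).
Proof.
  destruct y_exists as [y [Hb Hf]].
  assert (Hx : y * (1 - y) ^ 3 = 1 / 16).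
  { assert (16 * (y * (1 - y) ^ 3) - 1 = -(2 * y - 1) * (8 * y ^ 3 - 20 * y ^ 2 + 14 * y - 1)) by ring.
    rewrite Hf in H. lra. }
  set (q := 256 / 27 * (lam * y) * (1 + lam * y) ^ 3).
  assert (Hq : 0 <= q < 1).
  { unfold q, lam. set (v := 101 / 100 * y).
    assert (0 <= v <= 819 / 10000) by (unfold v; lra).
    assert (0 <= (1 + v) ^ 3 <= (1 + 819/10000) ^ 3).
    { split. apply pow_le; lra. apply pow_incr; lra. }
    assert (v * (1 + v) ^ 3 <= 819 / 10000 * (1 + 819 / 10000) ^ 3).
    { apply Rmult_le_compat; lra. }
    assert (0 <= v * (1 + v) ^ 3) by (apply Rmult_le_pos; lra).
    simpl in *. nra. }
  assert (Ht : forall k, t3 k = beta k * (y * (1 - y) ^ 3) ^ k).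
  { intros k. unfold t3, beta, rho3, binom. rewrite Hx, bnf4_eq.
    destruct (dens_nz k) as (H1 & H2 & H3 & H4).
    unfold Rdiv. rewrite Rmult_1_l, pow_inv. field.
    repeat split; auto. apply pow_nonzero. lra. }
  set (K := 3 / (1 - q)).
  assert (HK : 0 <= K) by (unfold K; apply Rmult_le_pos; [lra|left; apply Rinv_0_lt_compat; lra]).
  change (is_lim_seq (sum_n t3) (- (1 / 3))).
  apply (is_lim_seq_incr_n _ 3).
  apply lim_by_bound with (g := fun n => K * (/ lam) ^ n).
  - intros n. rewrite sm_sum_n.
    rewrite (sm_ext _ _ _ (fun k _ => Ht k)).
    rewrite P_expand. rewrite A_val by lia.
    assert (Phi3 y = - (1 / 3)).
    { unfold Phi3. replace (16 / 3 * y ^ 3) with (2/3 * (8 * y ^ 3)) by field.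
      replace (8 * y ^ 3) with (20 * y ^ 2 - 14 * y + 1) by lra. field. }
    rewrite H. replace (- (1 / 3) + EE y (S (n + 3)) - - (1 / 3)) with (EE y (S (n + 3))) by lra.
    eapply Rle_trans; [apply EE_bound; [lra|exact Hq]|].
    fold q. fold K. rewrite Rmult_comm. apply Rmult_le_compat_l; auto.
    replace (S (n + 3)) with (n + 4)%nat by lia. rewrite pow_add.
    assert (0 < / lam < 1) by (unfold lam; split; [apply Rinv_0_lt_compat; lra|]; 
       apply (Rmult_lt_reg_l (101/100)); [lra|]; rewrite Rinv_r; lra).
    assert (0 <= (/ lam) ^ n) by (apply pow_le; lra).
    assert ((/ lam) ^ 4 <= 1) by (rewrite <- (pow1 4); apply pow_incr; lra).
    nra.
  - replace (Finite 0) with (Rbar_mult K 0) by (simpl; f_equal; ring).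
    apply is_lim_seq_scal_l. apply is_lim_seq_geom.
    rewrite Rabs_right; unfold lam.
    + apply (Rmult_lt_reg_l (101/100)); [lra|]; rewrite Rinv_r; lra.
    + left; apply Rinv_0_lt_compat; lra.
Qed.

Definition aa (k : nat) : R := binom (4 * k) k / 16 ^ k.

Lemma aa_S k : aa (S k) = aa k * rat k / 16.
Proof.
  unfold aa, binom. rewrite C_ratio. simpl pow. field. apply pow_nonzero. lra.
Qed.

Lemma aa_bound k : 0 <= aa k <= (16 / 27) ^ k.
Proof.
  unfold aa, binom. rewrite <- bnf4_eq. pose proof (bnf4_bound k).
  assert (0 < 16 ^ k) by (apply pow_lt; lra).
  split.
  - apply Rmult_le_pos; [lra|]. left; apply Rinv_0_lt_compat; auto.
  - replace ((16 / 27) ^ k) with ((256 / 27) ^ k / 16 ^ k).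
    + unfold Rdiv at 1. apply Rmult_le_compat_r; [left; apply Rinv_0_lt_compat; auto|lra].
    + replace (256 / 27) with (16 / 27 * 16) by field. rewrite Rpow_mult_distr. field. lra.
Qed.

Lemma telescope (F : nat -> R) : is_lim_seq F 0 -> is_series (fun k => F (S k) - F k) (- F 0%nat).
Proof.
  intros HF. change (is_lim_seq (sum_n (fun k => F (S k) - F k)) (- F 0%nat)).
  apply is_lim_seq_ext with (fun N => F (S N) - F 0%nat).
  - intros N. rewrite sm_sum_n. induction N.
    + simpl. lra.
    + change (sm (S (S N)) (fun k => F (S k) - F k)) with
        (sm (S N) (fun k => F (S k) - F k) + (F (S (S N)) - F (S N))).
      rewrite <- IHN. lra.
  - replace (Finite (- F 0%nat)) with (Finite (0 - F 0%nat)) by (f_equal; lra).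
    apply is_lim_seq_minus'; [|apply is_lim_seq_const].
    apply (is_lim_seq_incr_1 F 0). exact HF.
Qed.

Lemma lin_bound k : INR k + 1 <= 4 * (5 / 4) ^ k.
Proof.
  induction k.
  - simpl; lra.
  - rewrite S_INR. simpl pow.
    assert (1 <= (5/4) ^ k) by (rewrite <- (pow1 k); apply pow_incr; lra). lra.
Qed.

Lemma Ra_lim (R : nat -> R) : (forall k, Rabs (R k) <= 400 * (INR k + 1) ^ 2) ->
  is_lim_seq (fun k => R k * aa k) 0.
Proof.
  intros HR. apply lim_by_bound with (g := fun k => 6400 * (25 / 27) ^ k).
  - intros k. rewrite Rminus_0_r, Rabs_mult.
    pose proof (aa_bound k). rewrite (Rabs_right (aa k)) by lra.
    pose proof (lin_bound k). pose proof (pos_INR k).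
    assert (E: (INR k + 1) ^ 2 <= 16 * (25 / 16) ^ k).
    { replace (25 / 16) with ((5/4) ^ 2) by field. rewrite <- pow_mult.
      rewrite Nat.mul_comm, pow_mult. replace 16 with (4 ^ 2) by field.
      rewrite <- Rpow_mult_distr. apply pow_incr. lra. }
    apply Rle_trans with (400 * (16 * (25 / 16) ^ k) * (16 / 27) ^ k).
    + apply Rmult_le_compat; try lra. apply Rabs_pos. eapply Rle_trans; [apply HR|]. lra.
    + replace (25 / 27) with (25 / 16 * (16 / 27)) by field. rewrite Rpow_mult_distr. lra.
  - replace (Finite 0) with (Rbar_mult 6400 0) by (simpl; f_equal; ring).
    apply is_lim_seq_scal_l. apply is_lim_seq_geom. rewrite Rabs_right; lra.
Qed.

Lemma abs_mul_frac V rho M : 0 <= rho <= 1 -> Rabs V <= M -> Rabs (V * rho) <= M.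
Proof.
  intros Hr HV. rewrite Rabs_mult, (Rabs_right rho) by lra.
  pose proof (Rabs_pos V). nra.
Qed.

Definition RR1 (k : nat) : R :=
  (36 - 384 * INR k ^ 2) * ((3 * INR k - 1) * (3 * INR k - 2) /
    ((4 * INR k - 1) * (4 * INR k - 2) * (4 * INR k - 3))).
Definition RR2 (k : nat) : R :=
  (-24 + 156 * INR k - 192 * INR k ^ 2) * (INR k /
    ((4 * INR k - 1) * (4 * INR k - 2) * (4 * INR k - 3))).

Lemma frac_01 a b : 0 <= a -> a <= b -> 0 < b -> 0 <= a / b <= 1.
Proof.
  intros. split. apply Rmult_le_pos; [lra|left; apply Rinv_0_lt_compat; lra].
  apply (Rmult_le_reg_r b); auto. unfold Rdiv. rewrite Rmult_assoc, Rinv_l by lra. lra.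
Qed.

Lemma R1_bound k : Rabs (RR1 k) <= 400 * (INR k + 1) ^ 2.
Proof.
  unfold RR1. destruct (nat_cases k) as [H|H].
  - rewrite H. replace ((36 - 384 * 0 ^ 2) * ((3 * 0 - 1) * (3 * 0 - 2) / ((4 * 0 - 1) * (4 * 0 - 2) * (4 * 0 - 3)))) with (-12) by field.
    rewrite Rabs_left by lra. simpl. lra.
  - set (K := INR k) in *. apply abs_mul_frac.
    + apply frac_01; try nra.
      * assert (A: (3 * K - 1) * (3 * K - 2) <= (4 * K - 1) * (4 * K - 2)) by nra.
        assert (B: 0 <= (4 * K - 1) * (4 * K - 2)) by nra.
        assert ((4 * K - 1) * (4 * K - 2) * 1 <= (4 * K - 1) * (4 * K - 2) * (4 * K - 3))
          by (apply Rmult_le_compat_l; lra). lra.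
      * assert (0 < (4 * K - 1) * (4 * K - 2)) by nra. nra.
    + rewrite Rabs_left by nra. nra.
Qed.

Lemma R2_bound k : Rabs (RR2 k) <= 400 * (INR k + 1) ^ 2.
Proof.
  unfold RR2. destruct (nat_cases k) as [H|H].
  - rewrite H. unfold Rdiv. rewrite Rmult_0_l, Rmult_0_r, Rabs_R0. nra.
  - set (K := INR k) in *. apply abs_mul_frac.
    + apply frac_01; try nra.
      * assert (A: K <= (4 * K - 1) * (4 * K - 2)) by nra.
        assert (B: 0 <= (4 * K - 1) * (4 * K - 2)) by nra.
        assert ((4 * K - 1) * (4 * K - 2) * 1 <= (4 * K - 1) * (4 * K - 2) * (4 * K - 3))
          by (apply Rmult_le_compat_l; lra). lra.
      * assert (0 < (4 * K - 1) * (4 * K - 2)) by nra. apply Rmult_lt_0_compat; lra.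
    + apply Rabs_le. nra.
Qed.

Definition t1 (k : nat) : R :=
  (22 * INR k ^ 2 + 17 * INR k - 2) * binom (4 * k) k / ((INR k + 1) * 16 ^ k).
Definition t2 (k : nat) : R :=
  (11 * INR k ^ 2 + 8 * INR k + 1) * binom (4 * k) k
      / ((3 * INR k + 1) * (3 * INR k + 2) * 16 ^ k).

Lemma t1_id k : t1 k = (RR1 (S k) * aa (S k) - RR1 k * aa k) + (-15) * t3 k.
Proof.
  rewrite aa_S. unfold t1, t3, aa, rat, RR1. rewrite S_INR.
  destruct (dens_nz k) as (H1 & H2 & H3 & H4). pose proof (pos_INR k).
  assert (16 ^ k <> 0) by (apply pow_nonzero; lra).
  set (K := INR k) in *. set (B := binom (4 * k) k). set (P := 16 ^ k) in *.
  field. repeat split; lra.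
Qed.

Lemma t2_id k : t2 k = (RR2 (S k) * aa (S k) - RR2 k * aa k) + (-3) * t3 k.
Proof.
  rewrite aa_S. unfold t2, t3, aa, rat, RR2. rewrite S_INR.
  destruct (dens_nz k) as (H1 & H2 & H3 & H4). pose proof (pos_INR k).
  assert (16 ^ k <> 0) by (apply pow_nonzero; lra).
  set (K := INR k) in *. set (B := binom (4 * k) k). set (P := 16 ^ k) in *.
  field. repeat split; lra.
Qed.

Lemma sum1 : is_series t1 17.
Proof.
  assert (HA := telescope (fun k => RR1 k * aa k) (Ra_lim RR1 R1_bound)).
  assert (HB := is_series_scal (-15) t3 _ sum3).
  pose proof (is_series_plus _ _ _ _ HA HB) as HC.
  assert (E: plus (- (RR1 0%nat * aa 0%nat)) (scal (-15) (- (1/3))) = 17).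
  { unfold RR1, aa, binom, plus, scal; simpl. unfold mult; simpl. unfold Binomial.C. simpl. field. }
  apply (is_series_ext (fun k => plus (RR1 (S k) * aa (S k) - RR1 k * aa k) (scal (-15) (t3 k)))).
  - intros k. rewrite t1_id. reflexivity.
  - rewrite <- E. exact HC.
Qed.

Lemma sum2 : is_series t2 1.
Proof.
  assert (HA := telescope (fun k => RR2 k * aa k) (Ra_lim RR2 R2_bound)).
  assert (HB := is_series_scal (-3) t3 _ sum3).
  pose proof (is_series_plus _ _ _ _ HA HB) as HC.
  assert (E: plus (- (RR2 0%nat * aa 0%nat)) (scal (-3) (- (1/3))) = 1).
  { unfold RR2, aa, binom, plus, scal; simpl. unfold mult; simpl. unfold Binomial.C. simpl. field. }
  apply (is_series_ext (fun k => plus (RR2 (S k) * aa (S k) - RR2 k * aa k) (scal (-3) (t3 k)))).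
  - intros k. rewrite t2_id. reflexivity.
  - rewrite <- E. exact HC.
Qed.

Theorem theorem1p3 :
  is_series (fun k : nat =>
      (22 * INR k ^ 2 + 17 * INR k - 2) * binom (4 * k) k
      / ((INR k + 1) * 16 ^ k)) 17
  /\ is_series (fun k : nat =>
      (11 * INR k ^ 2 + 8 * INR k + 1) * binom (4 * k) k
      / ((3 * INR k + 1) * (3 * INR k + 2) * 16 ^ k)) 1
  /\ is_series (fun k : nat =>
      (22 * INR k ^ 2 - 18 * INR k + 3) * binom (4 * k) k
      / ((2 * INR k - 1) * (4 * INR k - 1) * (4 * INR k - 3) * 16 ^ k))
      (- (1 / 3)).
Proof.
  split; [exact sum1|split; [exact sum2|exact sum3]].
Qed.
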